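(* Let $\xi=(\tau_L,\delta_L,\tau_R,\delta_R)\in\Phi$. If $\lambda_L^s+|\lambda_R^s|<1$ then $U_2>V_2$, where $U=(U_1,U_2)$ and $V=(V_1,V_2)$ are the points defined below.
   Context: For $\xi=(\tau_L,\delta_L,\tau_R,\delta_R)\in\mathbb{R}^4$ define $f_\xi:\mathbb{R}^2\to\mathbb{R}^2$ by $f_\xi(x,y)=(\tau_L x+y+1,\,-\delta_L x)$ if $x\le 0$ and $f_\xi(x,y)=(\tau_R x+y+1,\,-\delta_R x)$ if $x\ge 0$. Let $\Phi=\{\xi\in\mathbb{R}^4: \tau_L>\delta_L+1,\ \delta_L>0,\ \tau_R<-(\delta_R+1),\ \delta_R>0\}$. For $\xi\in\Phi$, the matrix $\begin{bmatrix}\tau_L&1\\-\delta_L&0\end{bmatrix}$ has real eigenvalues $0<\lambda_L^s<1<\lambda_L^u$ and $\begin{bmatrix}\tau_R&1\\-\delta_R&0\end{bmatrix}$ has real eigenvalues $\lambda_R^u<-1<\lambda_R^s<0$. Let $D=\left(\frac{1}{1-\lambda_L^s},0\right)$; for $\xi\in\Phi$, $D$ lies in $x>0$ and $f_\xi(D)$ lies in $x<0$. Let $U$ be the point where the line segment from $D$ to $f_\xi(D)$ meets the $y$-axis, and let $V=\left(0,\frac{-\lambda_R^u}{\lambda_R^u-1}\right)$. *)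

(* Defs.v *)
From Stdlib Require Import Reals.
Open Scope R_scope.

Definition f_xi (tL dL tR dR : R) (p : R * R) : R * R :=
  let (x, y) := p in
  if Rle_dec x 0 then (tL * x + y + 1, - dL * x)
  else (tR * x + y + 1, - dR * x).

Definition in_Phi (tL dL tR dR : R) : Prop :=
  tL > dL + 1 /\ dL > 0 /\ tR < - (dR + 1) /\ dR > 0.

Definition is_eigenvalue (t d lam : R) : Prop :=
  (t - lam) * (- lam) - 1 * (- d) = 0.

Definition on_segment (a b p : R * R) : Prop :=
  exists s, 0 <= s <= 1 /\
    fst p = fst a + s * (fst b - fst a) /\
    snd p = snd a + s * (snd b - snd a).

(* Main.v *)
Require Import Defs.
From Stdlib Require Import Reals Lra Psatz.
Open Scope R_scope.

Theorem lemma3p2 (tL dL tR dR lLs lLu lRs lRu : R) (U : R * R) :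
  in_Phi tL dL tR dR ->
  is_eigenvalue tL dL lLs -> is_eigenvalue tL dL lLu ->
  0 < lLs < 1 -> 1 < lLu ->
  is_eigenvalue tR dR lRs -> is_eigenvalue tR dR lRu ->
  lRu < -1 -> -1 < lRs < 0 ->
  on_segment (1 / (1 - lLs), 0) (f_xi tL dL tR dR (1 / (1 - lLs), 0)) U ->
  fst U = 0 ->
  lLs + Rabs lRs < 1 ->
  snd U > - lRu / (lRu - 1).
Proof.
  intros HP _ _ Hl _ Hs Hu Hu1 Hs1 [s [Hs01 [H1 H2]]] HU Hsum.
  unfold in_Phi, is_eigenvalue in *.
  rewrite Rabs_left in Hsum by lra.
  set (d := 1 / (1 - lLs)) in *.
  assert (hd : d * (1 - lLs) = 1) by (unfold d; field; lra).
  assert (hdpos : d > 0) by (unfold d; apply Rdiv_lt_0_compat; lra).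
  unfold f_xi in H1, H2.
  destruct (Rle_dec d 0) as [c|_]; [lra|].
  simpl in H1, H2.
  assert (Vt : tR = lRs + lRu).
  { assert ((lRs - lRu) * (lRs + lRu - tR) = 0) by nra.
    destruct (Rmult_integral _ _ H) as [h|h]; lra. }
  assert (Vd : dR = lRs * lRu) by (subst tR; nra).
  assert (Hsx : s * (lLs - tR) = 1).
  { assert (0 = (d + s * (tR * d + 0 + 1 - d)) * (1 - lLs)) by (rewrite <- H1, HU; ring).
    replace ((d + s * (tR * d + 0 + 1 - d)) * (1 - lLs)) with
      (d * (1 - lLs) + s * (tR * (d * (1 - lLs)) + (1 - lLs) - d * (1 - lLs))) in H by ring.
    rewrite hd in H. lra. }
  assert (Hsv : s = 1 / (lLs - tR)) by (field_simplify_eq; [lra|lra]).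
  assert (Hsnd : snd U = - dR * d * s) by (rewrite H2; ring).
  rewrite Hsnd, Hsv, Vd, Vt. unfold d.
  apply Rminus_gt.
  set (l := lLs) in *. set (a := - lRu). set (b := - lRs).
  replace lRu with (-a) by (unfold a; ring).
  replace lRs with (-b) by (unfold b; ring).
  assert (a > 1) by (unfold a; lra). assert (0 < b < 1) by (unfold b; lra).
  assert (b < 1 - l) by (unfold b; lra).
  unfold Rgt; match goal with |- _ < ?e => replace e with (a * ((1 - l - b) * (a + 1 - (1 - l))) / ((1 - l) * (l + b + a) * (a + 1)))
    by (field; repeat split; lra) end.
  apply Rdiv_lt_0_compat.
  - apply Rmult_lt_0_compat; [lra|]. apply Rmult_lt_0_compat; lra.
  - apply Rmult_lt_0_compat; [|lra]. apply Rmult_lt_0_compat; lra.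
Qed.
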